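(* Let $(\Omega,P)$ be a probability space, let $\mathbb{T}=\mathbb{R}$ or $\mathbb{Z}$, and let $\Theta=\{\theta_t\}_{t\in\mathbb{T}}$ be a family of measurable maps $\theta_t:\Omega\to\Omega$ with $(\theta_t)_*P=P$, $\theta_0=\mathrm{id}_\Omega$ and $\theta_s\circ\theta_t=\theta_{s+t}$ for all $s,t\in\mathbb{T}$. Let $\mathcal{X}$ be a topological space, $k$ a bounded continuous $\mathbb{C}$-valued positive definite kernel on $\mathcal{X}$, $\mathcal{M}\subset\mathcal{X}$ an open subset and $\Phi$ a random dynamical system on $\mathcal{M}$ with respect to $\Theta$. Then for every $x\in\mathcal{M}$ and every $t\in\mathbb{T}$, $$\iota^*K_{\Phi}^{t}\iota(k_x)=\int_\Omega k_{\Phi(t,\omega,x)}\,dP(\omega)$$ as elements of $\mathcal{H}_k$.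
   Context: A random dynamical system on $\mathcal{M}$ with respect to $\Theta$ is a measurable map $\Phi:\mathbb{T}\times\Omega\times\mathcal{M}\to\mathcal{M}$ with $\Phi(0,\omega,x)=x$ and $\Phi(t+s,\omega,x)=\Phi(t,\theta_s(\omega),\Phi(s,\omega,x))$. $\mathcal{H}_k$ is the RKHS of $k$ and $k_a:=k(a,\cdot)$. Let $M(\Omega,\mathcal{X})$ be the space of $\mathcal{X}$-valued random variables; a point $x\in\mathcal{X}$ is regarded as a constant random variable. Define the $\mathcal{B}(L^2(\Omega))$-valued positive definite kernel $\mathbf{k}$ on $M(\Omega,\mathcal{X})$ by $(\mathbf{k}(X,Y)f)(\omega)=k(X(\omega),Y(\omega))f(\omega)$, and let $\mathcal{H}_{\mathbf{k}}$ be its vector-valued RKHS: the unique Hilbert space of maps $M(\Omega,\mathcal{X})\to L^2(\Omega)$ containing $\mathbf{k}_Yf:=[X\mapsto \mathbf{k}(Y,X)f]$ for all $Y$, $f\in L^2(\Omega)$, with $\langle h,\mathbf{k}_Yf\rangle_{\mathcal{H}_{\mathbf{k}}}=\langle h(Y),f\rangle_{L^2(\Omega)}$. Define $\bm{\varphi}(t,X)(\omega):=\Phi(t,\theta_{-t}(\omega),X(\theta_{-t}(\omega)))$ for $X\in M(\Omega,\mathcal{M})$. Let $\mathcal{H}_{\mathbf{k},\Phi}$ be the closure in $\mathcal{H}_{\mathbf{k}}$ of $\mathrm{span}\{\mathbf{k}_Xh: X=\Phi(s,\cdot,x),\ x\in\mathcal{M},\ s\in\mathbb{T},\ h\in L^2(\Omega)\}$,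 and the $t$-th Perron–Frobenius operator $K_\Phi^t:\mathcal{H}_{\mathbf{k},\Phi}\to\mathcal{H}_{\mathbf{k},\Phi}$ is the linear operator with domain that span given by $K_\Phi^t\mathbf{k}_Xh=\mathbf{k}_{\bm{\varphi}(t,X)}h$. The map $\iota:\mathcal{H}_k\to\mathcal{H}_{\mathbf{k}}$ is the linear map determined by $\iota(k_x)=\mathbf{k}_x\mathbf{1}$ ($\mathbf{1}$ the constant function $1$), i.e. $\iota(h)(X)=h\circ X$; $\iota^*$ is its adjoint, given by $(\iota^*g)(x)=\mathbb{E}_P[g(x)]$. *)

(* Defs.v *)
From HB Require Import structures.
From mathcomp Require Import all_boot all_order all_algebra.
From mathcomp Require Import all_classical all_reals all_analysis.
From mathcomp Require Import complex.

Set Implicit Arguments.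
Unset Strict Implicit.
Unset Printing Implicit Defensive.

Import Order.TTheory GRing.Theory Num.Theory.
Import numFieldNormedType.Exports.
Local Open Scope classical_set_scope.
Local Open Scope ring_scope.

Section Defs.
Variable R : realType.

Definition Cx := R[i].

(* The time set T, viewed inside R: T = R (discrete = false) or T = Z
   (discrete = true). *)
Definition Tset (discrete : bool) : set R :=
  if discrete then [set t | t \is a Num.int] else setT.

Definition borel_set (X : topologicalType) (A : set X) : Prop :=
  <<s (@open X) >> A.

Definition cintegral d (Om : measurableType d) (P : {measure set Om -> \bar R})
  (f : Om -> Cx) : Cx :=
  (Rintegral P setT (fun w => complex.Re (f w)) +i* Rintegral P setT (fun w => complex.Im (f w)))%C.

Section Kernels.
Variable X : topologicalType.

Definition pos_def_kernel (k : X -> X -> Cx) : Prop :=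
  forall (n : nat) (c : 'I_n -> Cx) (x : 'I_n -> X),
    0 <= \sum_(i < n) \sum_(j < n) ((c i)^* * c j * k (x i) (x j))%C.

Definition bounded_kernel (k : X -> X -> Cx) : Prop :=
  exists B : R, forall x y, `|k x y| <= B%:C%C.

Definition continuous_kernel (k : X -> X -> Cx) : Prop :=
  continuous (fun p : X * X => complex.Re (k p.1 p.2)) /\
  continuous (fun p : X * X => complex.Im (k p.1 p.2)).
End Kernels.

Section Dyn.
Variables (d : measure_display) (Om : measurableType d).
Variables (discrete : bool).

Definition mds (P : {measure set Om -> \bar R}) (theta : R -> Om -> Om) : Prop :=
  [/\ forall t, Tset discrete t -> measurable_fun setT (theta t),
      forall t, Tset discrete t -> forall A, measurable A ->
        P (theta t @^-1` A) = P A,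
      theta 0 = id &
      forall s t, Tset discrete s -> Tset discrete t ->
        theta s \o theta t = theta (s + t)].

Variable X : topologicalType.

Definition rectangles : set_system (R * Om * X) :=
  [set E | exists A B C, measurable A /\
     measurable B /\ borel_set C /\ E = [set p | A p.1.1 /\ B p.1.2 /\ C p.2]].

Definition rds (theta : R -> Om -> Om) (M : set X) (Phi : R -> Om -> X -> X) : Prop :=
  [/\ forall t w x, Tset discrete t -> M x -> M (Phi t w x),
      (forall U, borel_set U ->
        <<s rectangles >>
          [set p | Tset discrete p.1.1 /\ M p.2 /\ U (Phi p.1.1 p.1.2 p.2)]),
      forall w x, M x -> Phi 0 w x = x &
      forall s t w x, Tset discrete s -> Tset discrete t -> M x ->
        Phi (t + s) w x = Phi t (theta s w) (Phi s w x)].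

(* ---- the vector-valued RKHS H_k-bold, represented on its generators ----
   Random variables M(Om, X) are represented by maps Om -> X, and elements of
   L^2(Om) by representatives Om -> C.  An element of H_k-bold is a map
   M(Om,X) -> L^2(Om). *)
Variable k : X -> X -> Cx.

Definition kbold_sec (Y : Om -> X) (f : Om -> Cx) : (Om -> X) -> Om -> Cx :=
  fun Z w => k (Y w) (Z w) * f w.

Definition span_elt (s : seq ((Om -> X) * (Om -> Cx))) : (Om -> X) -> Om -> Cx :=
  fun Z w => \sum_(p <- s) kbold_sec p.1 p.2 Z w.

Definition phibold (theta : R -> Om -> Om) (Phi : R -> Om -> X -> X) (t : R)
  (Y : Om -> X) : Om -> X :=
  fun w => Phi t (theta (- t) w) (Y (theta (- t) w)).

Definition PF (theta : R -> Om -> Om) (Phi : R -> Om -> X -> X) (t : R)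
  (s : seq ((Om -> X) * (Om -> Cx))) : seq ((Om -> X) * (Om -> Cx)) :=
  map (fun p => (phibold theta Phi t p.1, p.2)) s.

(* iota on span{k_x}: iota (sum_i c_i k_{x_i}) = sum_i k-bold_{x_i} (c_i 1),
   points x regarded as constant random variables *)
Definition iota_span (s : seq (Cx * X)) : seq ((Om -> X) * (Om -> Cx)) :=
  map (fun p => ((fun _ : Om => p.2), (fun _ : Om => p.1))) s.

Definition iota_adj (P : {measure set Om -> \bar R})
  (g : (Om -> X) -> Om -> Cx) : X -> Cx :=
  fun y => cintegral P (g (fun _ => y)).

(* H_k-valued integral  int_Om F(w) dP(w)  of F : Om -> H_k, identified (by
   the reproducing property <h, k_y> = h(y)) with the function
   y |-> int_Om F(w)(y) dP(w). *)
Definition Hk_integral (P : {measure set Om -> \bar R}) (F : Om -> X -> Cx) : X -> Cx :=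
  fun y => cintegral P (fun w => F w y).
End Dyn.
End Defs.

(* Main.v *)
Require Import Defs.
From HB Require Import structures.
From mathcomp Require Import all_boot all_order all_algebra.
From mathcomp Require Import all_classical all_reals all_analysis.
From mathcomp Require Import measurable_realfun.
From mathcomp Require Import complex.
Import GRing.Theory Num.Theory.
Import numFieldNormedType.Exports.
Local Open Scope classical_set_scope.
Local Open Scope ring_scope.

Lemma int_inv (R : realType) d (Om : measurableType d) (P : {measure set Om -> \bar R})
  (g : Om -> Om) (mg : measurable_fun setT g)
  (hg : forall A, measurable A -> P (g @^-1` A) = P A)
  (f : Om -> R) (mf : measurable_fun setT f) :
  Rintegral P setT (f \o g) = Rintegral P setT f.
Proof.
rewrite /Rintegral; congr fine.
have mfE : measurable_fun [set: Om] (fun x => (f x)%:E) by exact/measurable_EFinP.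
rewrite [LHS]integralE [RHS]integralE.
Local Open Scope ereal_scope.
set F := fun y => (f y)%:E.
have -> : \int[P]_x (fun x0 : Om => ((f \o g) x0)%:E)^\+ x =
   \int[P]_(x in g @^-1` setT) (F^\+ \o g) x by rewrite -funepos_comp.
have -> : \int[P]_x (fun x0 : Om => ((f \o g) x0)%:E)^\- x =
   \int[P]_(x in g @^-1` setT) (F^\- \o g) x by rewrite -funeneg_comp.
rewrite -!(ge0_integral_pushforward mg) //.
all: try (by move=> y _; exact: funeneg_ge0).
all: try (by move=> y _; exact: funepos_ge0).
all: try exact/measurable_funeneg.
all: try exact/measurable_funepos.
by congr (_ - _); apply: eq_measure_integral => A mA _; exact: hg.
Qed.
Local Close Scope ereal_scope.

Lemma section_meas (R : realType) d (Om : measurableType d) (X : topologicalType)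
  (t : R) (x : X) (E : set (R * Om * X)) :
  <<s @rectangles R d Om X >> E -> measurable [set w | E ((t, w), x)].
Proof.
move=> hE.
pose G := [set E : set (R * Om * X) | measurable [set w | E ((t, w), x)]].
suff : <<s @rectangles R d Om X >> `<=` G by move/(_ E hE).
apply: smallest_sub.
- split.
  + exact: measurable0.
  + by move=> A hA; exact: (measurableD measurableT hA).
  + by move=> F hF; exact: (bigcupT_measurable _ hF).
- move=> _ [A [B [C [mA [mB [bC ->]]]]]].
  rewrite /G /=.
  have [At|nAt] := pselect (A t); last first.
    by rewrite (_ : [set w | _] = set0) //; apply/seteqP; split => w //= [].
  have [Cx|nCx] := pselect (C x); last first.
    by rewrite (_ : [set w | _] = set0) //; apply/seteqP; split => w //= [_ []].
  rewrite (_ : [set w | _] = B) //; apply/seteqP; split => w /=.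
    by case=> _ [].
  by move=> Bw; split.
Qed.

Lemma meas_comp (R : realType) d (Om : measurableType d) (X : topologicalType)
  (h : Om -> X) (hm : forall U, open U -> measurable (h @^-1` U))
  (g : X -> R) (gc : continuous g) : measurable_fun setT (g \o h).
Proof.
apply: (measurability _ (RGenOpens.measurableE R)).
move=> _ [_ [a [b ->] <-]]; rewrite setTI.
apply: (hm (g @^-1` `]a, b[%classic)).
by move/continuousP : gc; apply; exact: interval_open.
Qed.

Lemma cont_sec (R : realType) (X : topologicalType) (k : X -> X -> Cx R) (y : X) :
  continuous_kernel k ->
  continuous (fun z => complex.Re (k z y)) /\ continuous (fun z => complex.Im (k z y)).
Proof.
case=> c1 c2.
have hp : continuous (fun z : X => (z, y)).
  by move=> z; apply: cvg_pair; [exact: cvg_id | exact: cvg_cst].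
split => z.
- exact: (continuous_comp (hp z) (c1 (z, y))).
- exact: (continuous_comp (hp z) (c2 (z, y))).
Qed.

Theorem proposition2 (R : realType) (d : measure_display) (Om : measurableType d)
  (P : probability Om R) (discrete : bool) (theta : R -> Om -> Om)
  (X : topologicalType) (k : X -> X -> Cx R) (M : set X)
  (Phi : R -> Om -> X -> X) :
  mds discrete P theta ->
  pos_def_kernel k -> bounded_kernel k -> continuous_kernel k ->
  open M ->
  rds discrete theta M Phi ->
  forall x t, M x -> Tset discrete t ->
    iota_adj P (span_elt k (PF theta Phi t (iota_span Om [:: (1, x)])))
    = Hk_integral P (fun w => k (Phi t w x)).
Proof.
move=> [thm thP th0 thadd] _ _ kc _ [_ Phim _ _] x t Mx Tt.
have Tnt : Tset discrete (- t).
  by move: Tt; rewrite /Tset; case: ifP => // _ ti; rewrite /= rpredN.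
have hm : forall U, open U -> measurable ((fun w => Phi t w x) @^-1` U).
  move=> U oU.
  have bU : borel_set U by exact: sub_sigma_algebra.
  have := @section_meas R d Om X t x _ (Phim U bU).
  congr measurable; apply/seteqP; split => w /=; first by case=> _ [].
  by move=> Uw; split.
apply/funext => y.
rewrite /iota_adj /span_elt /PF /iota_span /Hk_integral /=.
under eq_fun do rewrite big_seq1 /kbold_sec /phibold /=.
have [c1 c2] := @cont_sec R X k y kc.
under eq_fun do rewrite mulr1.
rewrite /cintegral; congr (_ +i* _)%C.
- exact: (@int_inv R d Om P _ (thm _ Tnt) (thP _ Tnt) _ (@meas_comp R d Om X _ hm _ c1)).
- exact: (@int_inv R d Om P _ (thm _ Tnt) (thP _ Tnt) _ (@meas_comp R d Om X _ hm _ c2)).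
Qed.
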